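(* Let $n\ge 1$ and let $f\in\mathcal{G}_1$ be $n$-ary, $f=2x_1\cdots x_n\left(\sum_{i=1}^n a_ix_i^2+\sum_{i=1}^n b_ix_i+c\right)$, with $a_i\ne 0$ for some $i$. If $f\in\mathcal{G}_0$, then $C(f)=C(2w_n)$. If $f\in\mathcal{G}_1\setminus\mathcal{G}_0$, then $C(f)=C(2q_n)$.
   Context: All operations are on $\mathbb{Z}_8$. $\mathcal{G}_1$ is the set of all operations (of any arity $n\ge1$) given by $2x_1\cdots x_n\left(\sum_{i=1}^n a_ix_i^2+\sum_{i=1}^n b_ix_i+c\right)$ with $a_i,b_i\in\{0,1\}$ and $c\in\{0,1,2,3\}$; $\mathcal{G}_0$ is the subset of those for which $\sum_{i=1}^na_i+\sum_{i=1}^nb_i+c$ is even. For an operation $f$, $C(f)$ denotes the clone generated by $f$ together with binary addition and all unary constant operations. $w_n=x_1\cdots x_n(x_1^2+1)$, $q_n=x_1^3x_2\cdots x_n$. *)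

(* Defs.v *)
From HB Require Import structures.
From mathcomp Require Import all_boot all_algebra.
Set Implicit Arguments. Unset Strict Implicit. Unset Printing Implicit Defensive.
Import GRing.Theory.
Local Open Scope ring_scope.

(* The ring Z_8 (8 >= 2, so 'Z_8 is genuinely Z/8Z). *)
Definition Z8 : comNzRingType := 'Z_8.

(* A finitary operation on Z_8: an arity n together with a map Z8^n -> Z8.
   Arguments are indexed by 'I_n (x_1..x_n of the paper are x 0 .. x (n-1)). *)
Definition op := {n : nat & ('I_n -> Z8) -> Z8}.
Definition mkop (n : nat) (f : ('I_n -> Z8) -> Z8) : op := existT _ n f.

(* Operations are identified extensionally. *)
Inductive clone_gen (S : op -> Prop) : op -> Prop :=
| cg_gen g : S g -> clone_gen S g
| cg_proj n (i : 'I_n) : clone_gen S (@mkop n (fun x => x i))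
| cg_comp m k (g : ('I_m -> Z8) -> Z8) (hs : 'I_m -> ('I_k -> Z8) -> Z8) :
    (0 < k)%N ->
    clone_gen S (mkop g) -> (forall j, clone_gen S (mkop (hs j))) ->
    clone_gen S (@mkop k (fun x => g (fun j => hs j x)))
| cg_ext n (g h : ('I_n -> Z8) -> Z8) :
    (forall x, g x = h x) -> clone_gen S (mkop g) -> clone_gen S (mkop h).

Definition add_op : op := @mkop 2 (fun x => x ord0 + x (lift ord0 ord0)).
Definition const_op (c : Z8) : op := @mkop 1 (fun _ => c).

Definition C (f : op) : op -> Prop :=
  clone_gen (fun g => g = f \/ g = add_op \/ exists c, g = const_op c).

Definition G1fun (n : nat) (a b : 'I_n -> bool) (c : 'I_4) (x : 'I_n -> Z8) : Z8 :=
  2 * (\prod_(i < n) x i) *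
  (\sum_(i < n) (a i)%:R * x i ^+ 2 + \sum_(i < n) (b i)%:R * x i + (val c)%:R).

Definition in_G0 (n : nat) (a b : 'I_n -> bool) (c : 'I_4) : bool :=
  ~~ odd (\sum_(i < n) nat_of_bool (a i) + \sum_(i < n) nat_of_bool (b i) + val c)%N.

(* 2 w_n and 2 q_n, of arity n.+1 (variables x_1..x_{n+1} = x 0..x n). *)
Definition two_w (n : nat) : op :=
  @mkop n.+1 (fun x => 2 * ((\prod_(i < n.+1) x i) * (x ord0 ^+ 2 + 1))).
Definition two_q (n : nat) : op :=
  @mkop n.+1 (fun x => 2 * (x ord0 ^+ 3 * \prod_(i < n.+1 | i != ord0) x i)).

(* Main.v *)
Require Import Defs.
From HB Require Import structures.
From mathcomp Require Import all_boot all_algebra ring.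
Set Implicit Arguments. Unset Strict Implicit. Unset Printing Implicit Defensive.
Import GRing.Theory.
Local Open Scope ring_scope.


Lemma cl_ext S0 n (g h : ('I_n -> Z8) -> Z8) :
  clone_gen S0 (mkop g) -> (forall x, g x = h x) -> clone_gen S0 (mkop h).
Proof. by move=> H E; exact: (cg_ext E H). Qed.

Lemma cl_const S0 n (hc : forall c, S0 (const_op c)) (c : Z8) :
  clone_gen S0 (@mkop n.+1 (fun _ => c)).
Proof.
exact: (@cg_comp S0 1 n.+1 (fun _ => c) (fun _ x => x ord0) (ltn0Sn n)
   (cg_gen (hc c)) (fun j => cg_proj S0 ord0)).
Qed.

Lemma cl_add S0 n (ha : S0 add_op) (F G : ('I_n.+1 -> Z8) -> Z8) :
  clone_gen S0 (mkop F) -> clone_gen S0 (mkop G) ->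
  clone_gen S0 (mkop (fun x => F x + G x)).
Proof.
move=> hF hG.
have hs : forall j : 'I_2,
  clone_gen S0 (mkop ((fun j : 'I_2 => if j == ord0 then F else G) j)).
  by move=> j; case: (j == ord0).
have H := @cg_comp S0 2 n.+1 (fun x => x ord0 + x (lift ord0 ord0)) _
  (ltn0Sn n) (cg_gen ha) hs.
by apply: (cl_ext H) => x.
Qed.

Lemma cl_muln S0 n (hc : forall c, S0 (const_op c)) (ha : S0 add_op)
  (F : ('I_n.+1 -> Z8) -> Z8) k :
  clone_gen S0 (mkop F) -> clone_gen S0 (mkop (fun x => F x *+ k)).
Proof.
move=> hF; elim: k => [|k IH].
  by apply: (cl_ext (cl_const n hc 0)) => x; rewrite mulr0n.
by apply: (cl_ext (cl_add ha hF IH)) => x; rewrite mulrS.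
Qed.

Lemma cl_sum S0 n (hc : forall c, S0 (const_op c)) (ha : S0 add_op)
  (I : Type) (r : seq I) (Fs : I -> ('I_n.+1 -> Z8) -> Z8) :
  (forall i, clone_gen S0 (mkop (Fs i))) ->
  clone_gen S0 (mkop (fun x => \sum_(i <- r) Fs i x)).
Proof.
move=> H; elim: r => [|i r IH].
  by apply: (cl_ext (cl_const n hc 0)) => x; rewrite big_nil.
by apply: (cl_ext (cl_add ha (H i) IH)) => x; rewrite big_cons.
Qed.

Lemma cl_mono (S1 S2 : op -> Prop) :
  (forall g, S1 g -> clone_gen S2 g) -> forall g, clone_gen S1 g -> clone_gen S2 g.
Proof.
move=> H g; elim => {g}.
- by move=> g /H.
- by move=> n i; exact: cg_proj.
- by move=> m k g hs hk _ IHg _ IHhs; exact: cg_comp.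
- by move=> n g h E _ IH; exact: cg_ext IH.
Qed.

Definition d2 (z : Z8) : Z8 := if ((nat_of_ord (z : 'Z_8)) %% 4 == 2)%N then 1 else 0.
Definition hh (z : Z8) : Z8 := d2 z + d2 (z + 3).

Lemma Z8_all (P : Z8 -> bool) : all (fun i => P (inZp i)) (iota 0 8) -> forall x, P x.
Proof.
move=> /allP H x; have := H (nat_of_ord (x : 'Z_8)); rewrite mem_iota /=.
by rewrite (ltn_ord (x : 'Z_8)) => /(_ isT); rewrite valZpK.
Qed.

Lemma d2_sq (x y : Z8) : 2 * (x * y) * x ^+ 2 = 2 * (x * y) + 4 * d2 x * y.
Proof.
apply/eqP; move: y; apply: Z8_all; move: x; apply: Z8_all; vm_compute; reflexivity.
Qed.

Lemma hh_id (x y : Z8) : 2 * (x * y) * x = 2 * (x * y) + 4 * hh x * y.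
Proof.
apply/eqP; move: y; apply: Z8_all; move: x; apply: Z8_all; vm_compute; reflexivity.
Qed.

Lemma four_id (x : Z8) : 4 * x = 4 * (d2 (x + 1) + d2 (x + 3)).
Proof. apply/eqP; move: x; apply: Z8_all; vm_compute; reflexivity. Qed.

Lemma mul8 (y : Z8) : y *+ 8 = 0.
Proof. apply/eqP; move: y; apply: Z8_all; vm_compute; reflexivity. Qed.

Lemma natZ8 k : (k%:R : Z8) = (k %% 8)%:R.
Proof. by rewrite (Zp_nat_mod (p := 8)). Qed.


Definition Tf n (i : 'I_n) (g : Z8 -> Z8) (x : 'I_n -> Z8) : Z8 :=
  4 * g (x i) * \prod_(j < n | j != i) x j.

Lemma prodD1 n (i : 'I_n) (x : 'I_n -> Z8) :
  \prod_(j < n) x j = x i * \prod_(j < n | j != i) x j.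
Proof. by rewrite (bigD1 i). Qed.

Lemma termA n (x : 'I_n -> Z8) i (r : Z8) :
  2 * \prod_(j < n) x j * (r * x i ^+ 2) = r * (2 * \prod_(j < n) x j) + r * Tf i d2 x.
Proof.
rewrite /Tf (prodD1 i); set p := \prod_(j < n | j != i) x j.
have H := d2_sq (x i) p.
transitivity (r * (2 * (x i * p) * x i ^+ 2)); first by ring.
by rewrite H mulrDr; congr (_ + _); ring.
Qed.

Lemma termB n (x : 'I_n -> Z8) i (r : Z8) :
  2 * \prod_(j < n) x j * (r * x i) = r * (2 * \prod_(j < n) x j) + r * Tf i hh x.
Proof.
rewrite /Tf (prodD1 i); set p := \prod_(j < n | j != i) x j.
have H := hh_id (x i) p.
transitivity (r * (2 * (x i * p) * x i)); first by ring.
by rewrite H mulrDr; congr (_ + _); ring.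
Qed.

Definition Sn n (a b : 'I_n -> bool) (c : 'I_4) : nat :=
  (\sum_(i < n) nat_of_bool (a i) + \sum_(i < n) nat_of_bool (b i) + val c)%N.

Definition Tsum n (a b : 'I_n -> bool) (x : 'I_n -> Z8) : Z8 :=
  \sum_(i < n) ((a i)%:R * Tf i d2 x + (b i)%:R * Tf i hh x).

Lemma G1_decomp n (a b : 'I_n -> bool) c x :
  G1fun a b c x = (Sn a b c)%:R * (2 * \prod_(i < n) x i) + Tsum a b x.
Proof.
rewrite /G1fun /Sn /Tsum !mulrDr !mulr_sumr.
under eq_bigr do rewrite termA.
under [X in _ + X + _]eq_bigr do rewrite termB.
rewrite !big_split /= !natrD !natr_sum !mulrDl !mulr_suml.
set P2 := 2 * \prod_(i < n) x i.
set A1 := \sum_(i < n) (a i)%:R * P2.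
set A2 := \sum_(i < n) (a i)%:R * Tf i d2 x.
set B1 := \sum_(i < n) (b i)%:R * P2.
set B2 := \sum_(i < n) (b i)%:R * Tf i hh x.
ring.
Qed.


Lemma prod2 n (m k : 'I_n) (F : 'I_n -> Z8) : m != k ->
  \prod_(j < n) F j = F m * (F k * \prod_(j < n | (j != m) && (j != k)) F j).
Proof. by move=> mk; rewrite (bigD1 m) //= (bigD1 k) //= eq_sym. Qed.

Lemma sum2 n (m k : 'I_n) (F : 'I_n -> Z8) : m != k ->
  \sum_(j < n) F j = F m + (F k + \sum_(j < n | (j != m) && (j != k)) F j).
Proof. by move=> mk; rewrite (bigD1 m) //= (bigD1 k) //= eq_sym. Qed.

Definition sub2 n (x : 'I_n -> Z8) (m k : 'I_n) (u v : Z8) : 'I_n -> Z8 :=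
  fun l => if l == m then u else if l == k then v else x l.

Definition phi (am bm ak bk : bool) (R L u v : Z8) : Z8 :=
  2 * (u * v * R) * (am%:R * u ^+ 2 + bm%:R * u + ak%:R * v ^+ 2 + bk%:R * v + L).

Definition Rr n (x : 'I_n -> Z8) (m k : 'I_n) := \prod_(j < n | (j != m) && (j != k)) x j.
Definition Ll n (a b : 'I_n -> bool) (c : 'I_4) (x : 'I_n -> Z8) (m k : 'I_n) :=
  \sum_(j < n | (j != m) && (j != k)) ((a j)%:R * x j ^+ 2 + (b j)%:R * x j) + (val c)%:R.

Lemma G1_sub2 n a b c (x : 'I_n -> Z8) m k u v : m != k ->
  G1fun a b c (sub2 x m k u v) =
  phi (a m) (b m) (a k) (b k) (Rr x m k) (Ll a b c x m k) u v.
Proof.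
move=> mk; rewrite /G1fun (prod2 _ mk) (sum2 _ mk) (sum2 (fun j => (b j)%:R * _) mk).
have Em : sub2 x m k u v m = u by rewrite /sub2 eqxx.
have Ek : sub2 x m k u v k = v by rewrite /sub2 eq_sym (negbTE mk) eqxx.
rewrite Em Ek.
have ER : \prod_(j < n | (j != m) && (j != k)) sub2 x m k u v j = Rr x m k.
  by apply: eq_bigr => j /andP[/negbTE Hm /negbTE Hk]; rewrite /sub2 Hm Hk.
have EL : \sum_(j < n | (j != m) && (j != k)) (a j)%:R * sub2 x m k u v j ^+ 2 +
          \sum_(j < n | (j != m) && (j != k)) (b j)%:R * sub2 x m k u v j +
          (val c)%:R = Ll a b c x m k.
  rewrite /Ll big_split /=; congr (_ + _ + _); apply: eq_bigr => j /andP[/negbTE Hm /negbTE Hk];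
  by rewrite /sub2 Hm Hk.
rewrite ER -EL /phi.
set s1 := \sum_(j < n | (j != m) && (j != k)) (a j)%:R * sub2 x m k u v j ^+ 2.
set s2 := \sum_(j < n | (j != m) && (j != k)) (b j)%:R * sub2 x m k u v j.
ring.
Qed.

Definition lin (p q r : nat) (s t : Z8) : Z8 := s *+ p + t *+ q + r%:R.
Definition ctm := (nat * (nat * nat * nat) * (nat * nat * nat))%type.
Definition linU (tt : ctm) s t := lin tt.1.2.1.1 tt.1.2.1.2 tt.1.2.2 s t.
Definition linV (tt : ctm) s t := lin tt.2.1.1 tt.2.1.2 tt.2.2 s t.
Definition cval (am bm ak bk : bool) (R L s t : Z8) (ts : seq ctm) : Z8 :=
  \sum_(tt <- ts) phi am bm ak bk R L (linU tt s t) (linV tt s t) *+ tt.1.1.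

Definition ts1 : seq ctm :=
 [:: (1,(1,0,1),(0,1,0)); (7,(0,0,1),(0,1,0)); (5,(0,1,1),(1,0,0)); (3,(0,0,1),(1,0,0));
     (7,(1,0,0),(0,1,0)); (1,(1,1,0),(1,0,0)); (7,(1,0,0),(1,0,0)); (1,(0,2,0),(1,0,0))]%N.
Definition ts2 : seq ctm :=
 [:: (1,(1,0,1),(0,1,0)); (7,(0,0,1),(0,1,0)); (5,(0,1,1),(1,0,0)); (3,(0,0,1),(1,0,0));
     (1,(1,1,0),(0,1,0)); (7,(0,1,0),(0,1,0)); (1,(0,2,0),(1,0,0)); (7,(0,1,0),(1,0,0))]%N.

Lemma cvalR am bm ak bk R L s t ts :
  cval am bm ak bk R L s t ts = R * cval am bm ak bk 1 L s t ts.
Proof.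
rewrite /cval mulr_sumr; apply: eq_bigr => tt _; rewrite mulrnAr; congr (_ *+ _).
by rewrite /phi; ring.
Qed.

Lemma ts1_id bm ak bk R L s t : cval true bm ak bk R L s t ts1 = 4 * d2 s * (t * R).
Proof.
rewrite cvalR.
suff -> : cval true bm ak bk 1 L s t ts1 = 4 * d2 s * t by ring.
rewrite /cval !big_cons big_nil.
apply/eqP; move: L; apply: Z8_all; move: t; apply: Z8_all; move: s; apply: Z8_all.
by case: bm; case: ak; case: bk; vm_compute; reflexivity.
Qed.

Lemma ts2_id bm ak bk R L s t : cval true bm ak bk R L s t ts2 = 4 * d2 t * (s * R).
Proof.
rewrite cvalR.
suff -> : cval true bm ak bk 1 L s t ts2 = 4 * d2 t * s by ring.
rewrite /cval !big_cons big_nil.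
apply/eqP; move: L; apply: Z8_all; move: t; apply: Z8_all; move: s; apply: Z8_all.
by case: bm; case: ak; case: bk; vm_compute; reflexivity.
Qed.


Lemma cl_lin S0 n (hc : forall c, S0 (const_op c)) (ha : S0 add_op) (m k : 'I_n.+1) p q r :
  clone_gen S0 (@mkop n.+1 (fun x => lin p q r (x m) (x k))).
Proof.
apply: (cl_ext (cl_add ha (cl_add ha (cl_muln hc ha p (cg_proj S0 m))
   (cl_muln hc ha q (cg_proj S0 k))) (cl_const n hc r%:R))) => x.
by [].
Qed.

Lemma cl_term S0 n (hc : forall c, S0 (const_op c)) (ha : S0 add_op) a b c
  (hf : clone_gen S0 (@mkop n.+1 (G1fun a b c))) m k (tt : ctm) :
  clone_gen S0 (mkop (fun x => G1fun a b c
      (sub2 x m k (linU tt (x m) (x k)) (linV tt (x m) (x k))) *+ tt.1.1)).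
Proof.
have hs : forall l : 'I_n.+1, clone_gen S0
   (mkop (fun x => sub2 x m k (linU tt (x m) (x k)) (linV tt (x m) (x k)) l)).
  move=> l; rewrite /sub2; case: (l == m); first exact: cl_lin.
  case: (l == k); first exact: cl_lin.
  exact: cg_proj.
exact: (cl_muln hc ha tt.1.1 (cg_comp (ltn0Sn n) hf hs)).
Qed.

Lemma combo_val n a b c (x : 'I_n -> Z8) m k ts : m != k ->
  \sum_(tt <- ts) G1fun a b c (sub2 x m k (linU tt (x m) (x k)) (linV tt (x m) (x k))) *+ tt.1.1
  = cval (a m) (b m) (a k) (b k) (Rr x m k) (Ll a b c x m k) (x m) (x k) ts.
Proof. by move=> mk; rewrite /cval; apply: eq_bigr => tt _; rewrite G1_sub2. Qed.

Lemma Tm_val n (x : 'I_n -> Z8) m k : m != k -> Tf m d2 x = 4 * d2 (x m) * (x k * Rr x m k).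
Proof. by move=> mk; rewrite /Tf (bigD1 k) /= 1?eq_sym. Qed.

Lemma Tk_val n (x : 'I_n -> Z8) m k : m != k -> Tf k d2 x = 4 * d2 (x k) * (x m * Rr x m k).
Proof.
move=> mk; rewrite /Tf (bigD1 m) //= /Rr; congr (_ * (_ * _)).
by apply: eq_bigl => j; rewrite andbC.
Qed.


Lemma Tin1 S0 (hc : forall c, S0 (const_op c)) (ha : S0 add_op) (a b : 'I_1 -> bool) c :
  a ord0 -> clone_gen S0 (@mkop 1 (G1fun a b c)) -> clone_gen S0 (mkop (Tf (ord0 : 'I_1) d2)).
Proof.
move=> a0 hf.
have hY : clone_gen S0 (@mkop 1 (fun x => G1fun a b c x + x ord0 *+ (14 * Sn a b c))).
  exact: (cl_add ha hf (cl_muln hc ha _ (cg_proj S0 ord0))).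
have hs : forall j : 'I_1, clone_gen S0
    ((@mkop 1 ((fun _ (x : 'I_1 -> Z8) => x ord0 + (nat_of_bool (b ord0))%:R) j))).
  move=> j; exact: (cl_add ha (cg_proj S0 ord0) (cl_const 0 hc _)).
apply: (cl_ext (cg_comp (ltn0Sn 0) hY hs)) => x /=.
rewrite /G1fun /Tf /Sn !big_ord1 big_mkcond big_ord1 eqxx /=.
rewrite a0; clear hf hY hs; move: (x ord0) (b ord0) => x0 bb.
case: c => [[|[|[|[|cc]]]] Hc] //; case: bb; apply/eqP; move: x0; apply: Z8_all;
vm_compute; reflexivity.
Qed.

Lemma ex_other n (m : 'I_n.+2) : exists k : 'I_n.+2, m != k.
Proof.
case: (eqVneq m ord0) => [->|H]; last by exists ord0.
by exists ord_max.
Qed.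

Lemma Tin S0 n (hc : forall c, S0 (const_op c)) (ha : S0 add_op) (a b : 'I_n.+1 -> bool) (c : 'I_4) :
  (exists m, a m) -> clone_gen S0 (@mkop n.+1 (G1fun a b c)) ->
  forall i : 'I_n.+1, clone_gen S0 (mkop (Tf i d2)).
Proof.
move=> [m am] hf i.
case: n a b c hf m am i => [|n] a b c hf m am i.
  have -> : i = ord0 by apply: ord_inj; case: i => [[]].
  have em : m = ord0 by apply: ord_inj; case: m am => [[]].
  by apply: (Tin1 hc ha _ hf); rewrite -em.
have hcomb := fun m k ts => cl_sum hc ha ts (fun tt => cl_term hc ha hf m k tt).
case: (eqVneq i m) => [-> | im].
  have [k mk] := ex_other m.
  apply: (cl_ext (hcomb m k ts1)) => x.
  by rewrite combo_val // (Tm_val _ mk) am ts1_id.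
have mi : m != i by rewrite eq_sym.
apply: (cl_ext (hcomb m i ts2)) => x.
by rewrite combo_val // (Tk_val _ mi) am ts2_id.
Qed.


Lemma Tshift S0 n (hc : forall c, S0 (const_op c)) (ha : S0 add_op) (i : 'I_n.+1) s :
  clone_gen S0 (mkop (Tf i d2)) -> clone_gen S0 (mkop (Tf i (fun z => d2 (z + s)))).
Proof.
move=> hT.
have hs : forall l : 'I_n.+1, clone_gen S0
   (mkop (fun x : 'I_n.+1 -> Z8 => if l == i then x l + s else x l)).
  move=> l; case: (l == i); last exact: cg_proj.
  exact: (cl_add ha (cg_proj S0 l) (cl_const n hc s)).
apply: (cl_ext (cg_comp (ltn0Sn n) hT hs)) => x /=.
rewrite /Tf eqxx; congr (_ * _); apply: eq_bigr => j /negbTE ->; by [].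
Qed.

Lemma fourP_in S0 n (hc : forall c, S0 (const_op c)) (ha : S0 add_op) :
  (forall i : 'I_n.+1, clone_gen S0 (mkop (Tf i d2))) ->
  clone_gen S0 (mkop (fun x : 'I_n.+1 -> Z8 => 4 * \prod_(i < n.+1) x i)).
Proof.
move=> hT.
apply: (cl_ext (cl_add ha (Tshift hc ha 1 (hT ord0)) (Tshift hc ha 3 (hT ord0)))) => x.
rewrite /= /Tf (prodD1 ord0); set p := \prod_(j < n.+1 | j != ord0) x j.
symmetry.
transitivity ((4 * x ord0) * p); first by ring.
by rewrite four_id; ring.
Qed.

Lemma Tsum_in S0 n (hc : forall c, S0 (const_op c)) (ha : S0 add_op) (a b : 'I_n.+1 -> bool) :
  (forall i : 'I_n.+1, clone_gen S0 (mkop (Tf i d2))) ->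
  clone_gen S0 (mkop (Tsum a b)).
Proof.
move=> hT.
have hi : forall i : 'I_n.+1, clone_gen S0 (mkop (fun x =>
   (a i)%:R * Tf i d2 x + (b i)%:R * Tf i hh x)).
  move=> i.
  apply: (cl_ext (cl_add ha (cl_muln hc ha (a i) (hT i))
     (cl_muln hc ha (b i) (cl_add ha (hT i) (Tshift hc ha 3 (hT i)))))) => x.
  by rewrite /Tf /hh; ring.
exact: (cl_ext (cl_sum hc ha (index_enum 'I_n.+1) hi)).
Qed.

Definition wfun n (x : 'I_n.+1 -> Z8) : Z8 :=
  2 * ((\prod_(i < n.+1) x i) * (x ord0 ^+ 2 + 1)).
Definition qfun n (x : 'I_n.+1 -> Z8) : Z8 :=
  2 * (x ord0 ^+ 3 * \prod_(i < n.+1 | i != ord0) x i).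

Lemma wfun_dec n x : wfun x = 4 * \prod_(i < n.+1) x i + Tf ord0 d2 x.
Proof.
rewrite /wfun /Tf (prodD1 ord0); set p := \prod_(j < n.+1 | j != ord0) x j.
have H := d2_sq (x ord0) p.
transitivity (2 * (x ord0 * p) * x ord0 ^+ 2 + 2 * (x ord0 * p)); first by ring.
by rewrite H; ring.
Qed.

Lemma qfun_dec n x : qfun x = 2 * \prod_(i < n.+1) x i + Tf ord0 d2 x.
Proof.
rewrite /qfun /Tf (prodD1 ord0); set p := \prod_(j < n.+1 | j != ord0) x j.
have H := d2_sq (x ord0) p.
transitivity (2 * (x ord0 * p) * x ord0 ^+ 2); first by ring.
by rewrite H; ring.
Qed.

Definition ae0 n := fun i : 'I_n.+1 => i == ord0.
Definition bz n := fun i : 'I_n.+1 => false.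

Lemma sumA0 n (x : 'I_n.+1 -> Z8) : \sum_(i < n.+1) (ae0 i)%:R * x i ^+ 2 = x ord0 ^+ 2.
Proof.
rewrite (bigD1 ord0) //= big1 ?addr0 /ae0 ?eqxx ?mul1r // => i /negbTE ->.
by rewrite mul0r.
Qed.

Lemma sumB0 n (x : 'I_n.+1 -> Z8) : \sum_(i < n.+1) (bz i)%:R * x i = 0.
Proof. by rewrite big1 // => i _; rewrite mul0r. Qed.

Lemma wfun_G1 n x : wfun x = G1fun (@ae0 n) (@bz n) (@Ordinal 4 1 isT) x.
Proof. by rewrite /wfun /G1fun sumA0 sumB0 /=; ring. Qed.

Lemma qfun_G1 n x : qfun x = G1fun (@ae0 n) (@bz n) (@Ordinal 4 0 isT) x.
Proof.
rewrite /qfun /G1fun sumA0 sumB0 (prodD1 ord0) /=; ring.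
Qed.

Lemma sq_odd k : odd k -> ((k * k)%:R : Z8) = 1.
Proof.
move=> ok; rewrite natZ8 -modnMm.
have : odd (k %% 8)%N by rewrite odd_mod.
have : (k %% 8 < 8)%N by rewrite ltn_mod.
move: (k %% 8)%N => r.
by do 8?[case: r => [|r] //]; move=> *; apply/eqP; vm_compute; reflexivity.
Qed.

Definition Sgen (h : op) : op -> Prop :=
  fun g => g = h \/ g = add_op \/ exists c, g = const_op c.

Lemma Sgen_add h : Sgen h add_op.
Proof. by right; left. Qed.
Lemma Sgen_const h : forall c, Sgen h (const_op c).
Proof. by move=> c; right; right; exists c. Qed.

Lemma C_equiv (h1 h2 : op) :
  clone_gen (Sgen h2) h1 -> clone_gen (Sgen h1) h2 ->
  forall g, C h1 g <-> C h2 g.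
Proof.
move=> H1 H2 g; split; apply: cl_mono => k [->|[->|[c ->]]] //.
- by apply: cg_gen; apply: Sgen_add.
- by apply: cg_gen; apply: Sgen_const.
- by apply: cg_gen; apply: Sgen_add.
- by apply: cg_gen; apply: Sgen_const.
Qed.


Lemma main_even (n : nat) (a b : 'I_n.+1 -> bool) (c : 'I_4) :
  (exists i, a i) -> in_G0 a b c ->
  forall g, C (mkop (G1fun a b c)) g <-> C (two_w n) g.
Proof.
move=> ex ev.
have ev' : ~~ odd (Sn a b c) := ev.
have TinF := Tin (Sgen_const _) (Sgen_add _) ex
   (cg_gen (S := Sgen (mkop (G1fun a b c))) (or_introl erefl)).
have hw : clone_gen (Sgen (two_w n)) (mkop (@wfun n)) := cg_gen (or_introl erefl).
have TinW := Tin (Sgen_const _) (Sgen_add _) (ex_intro _ ord0 (eqxx _) : exists m, @ae0 n m)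
   (cl_ext hw (@wfun_G1 n)).
apply: C_equiv.
  apply: (cl_ext (cl_add (Sgen_add _)
     (cl_muln (Sgen_const _) (Sgen_add _) (Sn a b c)./2 (fourP_in (Sgen_const _) (Sgen_add _) TinW))
     (Tsum_in (Sgen_const _) (Sgen_add _) a b TinW))) => x /=.
  rewrite G1_decomp.
  have eS : Sn a b c = ((Sn a b c)./2 * 2)%N.
    by rewrite -{1}(odd_double_half (Sn a b c)) (negbTE ev') add0n muln2.
  have -> : (Sn a b c)%:R = ((Sn a b c)./2)%:R * 2 :> Z8 by rewrite {1}eS natrM.
  set P := \prod_(i < n.+1) x i; set Ts := Tsum a b x; set h := (Sn a b c)./2.
  ring.
apply: (cl_ext (cl_add (Sgen_add _) (fourP_in (Sgen_const _) (Sgen_add _) TinF) (TinF ord0))) => x /=.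
by symmetry; apply: wfun_dec.
Qed.

Lemma main_odd (n : nat) (a b : 'I_n.+1 -> bool) (c : 'I_4) :
  (exists i, a i) -> ~~ in_G0 a b c ->
  forall g, C (mkop (G1fun a b c)) g <-> C (two_q n) g.
Proof.
move=> ex od.
have oS : odd (Sn a b c) by move: od; rewrite /in_G0 negbK.
have hf : clone_gen (Sgen (mkop (G1fun a b c))) (mkop (G1fun a b c)) := cg_gen (or_introl erefl).
have TinF := Tin (Sgen_const _) (Sgen_add _) ex hf.
have hq : clone_gen (Sgen (two_q n)) (mkop (@qfun n)) := cg_gen (or_introl erefl).
have TinQ := Tin (Sgen_const _) (Sgen_add _) (ex_intro _ ord0 (eqxx _) : exists m, @ae0 n m)
   (cl_ext hq (@qfun_G1 n)).
have h8 : forall y : Z8, y *+ (8 * Sn a b c) = 0.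
  by move=> y; rewrite mulrnA mul8 mul0rn.
apply: C_equiv.
  apply: (cl_ext (cl_add (Sgen_add _) (cl_add (Sgen_add _)
     (cl_muln (Sgen_const _) (Sgen_add _) (Sn a b c) hq)
     (cl_muln (Sgen_const _) (Sgen_add _) (7 * Sn a b c) (TinQ ord0)))
     (Tsum_in (Sgen_const _) (Sgen_add _) a b TinQ))) => x /=.
  rewrite qfun_dec G1_decomp.
  set P := \prod_(i < n.+1) x i; set Ts := Tsum a b x; set T0 := Tf ord0 d2 x.
  set S := Sn a b c.
  transitivity ((2 * P + T0) *+ S + T0 *+ (7 * S) + Ts - T0 *+ (8 * S)).
    by rewrite h8 subr0.
  ring.
apply: (cl_ext (cl_add (Sgen_add _) (cl_add (Sgen_add _)
     (cl_muln (Sgen_const _) (Sgen_add _) (Sn a b c) hf)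
     (cl_muln (Sgen_const _) (Sgen_add _) (7 * Sn a b c) (Tsum_in (Sgen_const _) (Sgen_add _) a b TinF)))
     (TinF ord0))) => x /=.
symmetry; rewrite -[LHS]/(qfun x) qfun_dec G1_decomp.
set P := \prod_(i < n.+1) x i; set Ts := Tsum a b x; set T0 := Tf ord0 d2 x.
transitivity (((Sn a b c) * (Sn a b c))%:R * (2 * P) + Ts *+ (8 * Sn a b c) + T0).
  by rewrite sq_odd // h8 addr0 mul1r.
set S := Sn a b c.
ring.
Qed.

Close Scope ring_scope.

Theorem theorem4p1 (n : nat) (a b : 'I_n.+1 -> bool) (c : 'I_4) :
  (exists i, a i) ->
  (in_G0 a b c ->
     forall g, C (mkop (G1fun a b c)) g <-> C (two_w n) g) /\
  (~~ in_G0 a b c ->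
     forall g, C (mkop (G1fun a b c)) g <-> C (two_q n) g).
Proof.
move=> ex; split; [exact: main_even | exact: main_odd].
Qed.
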